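(* Let $\mathcal V=\{v^{(1)},\dots,v^{(p)}\}\subset(\mathbb{R}\cup\{-\infty\})^n$ be a finite set, $V$ the matrix with columns $v^{(k)}$, with no row and no column identically $-\infty$, and let $$T_i(x)=\inf_{k\in[p],\,V_{ik}\neq-\infty}\Big[-V_{ik}+\max_{j\in[n],\,j\neq i}(V_{jk}+x_j)\Big],\qquad i\in[n].$$ Let $W=\max_{v\in\mathcal V}\|v\|_H$. Then any finite eigenvector $u\in\mathbb{R}^n$ of $T$ (i.e. $T(u)=\lambda+u$ for some $\lambda$) satisfies $\|u\|_H\le W$.
   Context: $-\infty+c=-\infty$, $\max\emptyset=-\infty$. Hilbert's seminorm: $\|x\|_H=\max_i x_i-\min_i x_i$ (equal to $+\infty$ if some but not all entries are $-\infty$). *)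

(* Defs.v *)
From HB Require Import structures.
From mathcomp Require Import all_boot all_order all_algebra.
From mathcomp Require Import all_classical all_reals ereal.
Set Implicit Arguments. Unset Strict Implicit. Unset Printing Implicit Defensive.
Import Order.TTheory GRing.Theory Num.Theory.
Local Open Scope ring_scope.
Local Open Scope ereal_scope.

(* Entries in R ∪ {-oo} are modelled in \bar R (mathcomp-analysis extended
   reals), with the standing hypothesis that no entry equals +oo.
   In \bar R, -oo + c = -oo, and the empty max is -oo. *)

(* Hilbert seminorm of a vector with entries in R ∪ {-oo}:
   max_i v_i - min_i v_i; equals +oo when some but not all entries are -oo. *)
Definition hilbert (R : realType) (n : nat) (v : 'I_n -> \bar R) : \bar R :=
  \big[maxe/-oo]_(i < n) v i - \big[mine/+oo]_(i < n) v i.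

Definition Top (R : realType) (n p : nat) (V : 'M[\bar R]_(n, p))
    (x : 'I_n -> R) (i : 'I_n) : \bar R :=
  \big[mine/+oo]_(k < p | V i k != -oo)
     (- V i k + \big[maxe/-oo]_(j < n | j != i) (V j k + (x j)%:E)).

Definition Wmax (R : realType) (n p : nat) (V : 'M[\bar R]_(n, p)) : \bar R :=
  \big[maxe/-oo]_(k < p) hilbert (fun i => V i k).

(* Main.v *)
Require Import Defs.
From HB Require Import structures.
From mathcomp Require Import all_boot all_order all_algebra.
From mathcomp Require Import all_classical all_reals ereal.
From mathcomp Require Import lra.
Import Order.TTheory GRing.Theory Num.Theory.
Local Open Scope ring_scope.
Local Open Scope ereal_scope.

Theorem lemma6p2 (R : realType) (n p : nat) (V : 'M[\bar R]_(n, p))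
    (Vfin : forall i k, V i k != +oo)
    (Vrow : forall i, exists k, V i k != -oo)
    (Vcol : forall k, exists i, V i k != -oo)
    (u : 'I_n -> R) (lambda : R)
    (Heig : forall i, Top V u i = (lambda + u i)%:E) :
  hilbert (fun i => (u i)%:E) <= Wmax V.
Proof.
case: n V Vfin Vrow Vcol u Heig => [|n] V Vfin Vrow Vcol u Heig.
  by rewrite /hilbert !big_ord0; exact: leNye.
have [M _ BM] := @eq_bigmax _ _ _ -oo (@ord0 n) xpredT (fun i => (u i)%:E)
  isT (fun i _ => leNye _).
have [m _ Bm] := @eq_bigmin _ _ _ +oo (@ord0 n) xpredT (fun i => (u i)%:E)
  isT (fun i _ => leey _).
rewrite /hilbert BM Bm.
have lam0 : (lambda <= 0)%R.
  have [k0 _] := Vrow M.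
  have [i _ Bi] := @eq_bigmax _ _ _ -oo (@ord0 n) xpredT
     (fun j => V j k0 + (u j)%:E) isT (fun i _ => leNye _).
  have [i' Hi'] := Vcol k0.
  have : V i' k0 + (u i')%:E <= V i k0 + (u i)%:E.
    by rewrite -Bi; exact: le_bigmax.
  case E: (V i k0) => [r| |].
  - move=> _.
    have := Heig i; rewrite /Top => Ht.
    have : (lambda + u i)%:E <= - r%:E + (r + u i)%R%:E.
      rewrite -Ht; apply: (@bigmin_inf _ _ _ _ k0); first by rewrite E.
      rewrite E; apply: leeD2l; apply: bigmax_le; first exact: leNye.
      move=> j _; rewrite EFinD -E -Bi.
      exact: le_bigmax.
    rewrite -EFinN -EFinD lee_fin addKr.
    by move=> h; lra.
  - by move: (Vfin i k0); rewrite E.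
  - have := Vfin i' k0; move: Hi'.
    by case: (V i' k0) => [r'| |] //= _ _; rewrite addNye leeNy_eq.
have [k0 Hk0] := Vrow m.
have [k Pk Hk] := @eq_bigmin _ _ _ +oo k0 (fun k => V m k != -oo)
  (fun k => - V m k + \big[maxe/-oo]_(j < n.+1 | j != m) (V j k + (u j)%:E))
  Hk0 (fun _ _ => leey _).
have Pk' : V m k != -oo := Pk.
have HT := Heig m; rewrite /Top Hk in HT.
have HW : V m k - V M k <= Wmax V.
  rewrite /Wmax; apply: (bigmax_sup k) => //; rewrite /hilbert.
  apply: leeB; first exact: (bigmax_sup m).
  exact: (bigmin_inf M).
apply: le_trans HW.
have := Vfin m k; move: Pk' HT.
case Em: (V m k) => [r| |] //= _ HT _.
have := Vfin M k.
case EM: (V M k) => [s| |] //= _; last by rewrite leey.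
have [eMm|neMm] := eqVneq M m.
  by move: EM; rewrite eMm Em => -[->]; rewrite -!EFinB lee_fin !subrr.
have : (s + u M)%:E <= \big[maxe/-oo]_(j < n.+1 | j != m) (V j k + (u j)%:E).
  by rewrite EFinD -EM; exact: (bigmax_sup M).
move=> Hle.
have : (- r + (s + u M))%R%:E <= (lambda + u m)%:E.
  by rewrite -HT EFinD; apply: leeD2l.
rewrite -!EFinB !lee_fin => h; lra.
Qed.
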